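(* Let $\mathcal{F}$ be a class of simple graphs and consider the assertions: (1) $\mathcal{F}$ is closed under edge contractions; (2) $\equiv_{\mathcal{F}}$ is preserved under right lexicographic products, i.e.\ for all simple graphs $G,G',H$, if $G\equiv_{\mathcal{F}}G'$ then $G\cdot H\equiv_{\mathcal{F}}G'\cdot H$; (3) $\mathrm{cl}(\mathcal{F})$ is closed under edge contractions. Then (1) implies (2), and (2) and (3) are equivalent.
   Context: All graphs are finite, undirected, without multiple edges; simple means without loops. $\hom(F,G)$ counts homomorphisms $F\to G$; $G\equiv_{\mathcal{F}}H$ means $\hom(F,G)=\hom(F,H)$ for all $F\in\mathcal{F}$; $\mathrm{cl}(\mathcal{F})$ is the class of all simple graphs $K$ such that for all simple $G,H$, $G\equiv_{\mathcal{F}}H$ implies $\hom(K,G)=\hom(K,H)$. The lexicographic product $G\cdot H$ has vertex set $V(G)\times V(H)$, with $(g,h)$ adjacent to $(g',h')$ iff either $g=g'$ and $hh'\in E(H)$, or $gg'\in E(G)$. For a partition $\mathcal{P}$ of $V(F)$, $F/\mathcal{P}$ is the simple graph on $\mathcal{P}$ with an edge $PQ$ ($P\neq Q$) iff some $p\in P,q\in Q$ are adjacent in $F$; a class is closed under edge contractions if it contains every graph isomorphic to $F/\mathcal{P}$ for $F$ in the class and $\mathcal{P}$ a partition of $V(F)$ with $F[P]$ connected for all $P\in\mathcal{P}$. *)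

(* Defs.v *)
From mathcomp Require Import all_boot.
Set Implicit Arguments. Unset Strict Implicit. Unset Printing Implicit Defensive.

Record sgraph := SGraph {
  vert :> finType;
  adj : rel vert;
  adj_sym : symmetric adj;
  adj_irr : irreflexive adj }.

Definition is_hom (F G : sgraph) (f : {ffun F -> G}) : bool :=
  [forall x : F, forall y : F, adj x y ==> adj (f x) (f y)].

Definition hom (F G : sgraph) : nat := #|[set f : {ffun F -> G} | is_hom f]|.

Definition gclass := sgraph -> Prop.

Definition hom_equiv (C : gclass) (G H : sgraph) : Prop :=
  forall K, C K -> hom K G = hom K H.

Definition cl (C : gclass) : gclass :=
  fun K => forall G H : sgraph, hom_equiv C G H -> hom K G = hom K H.

Definition iso (G H : sgraph) : Prop :=
  exists f : G -> H, bijective f /\ forall x y, adj (f x) (f y) = adj x y.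

Definition lex_adj (G H : sgraph) : rel (G * H)%type :=
  fun u v => ((u.1 == v.1) && adj u.2 v.2) || adj u.1 v.1.

Lemma lex_adj_sym G H : symmetric (@lex_adj G H).
Proof.
move=> [g h] [g' h']; rewrite /lex_adj /= eq_sym (adj_sym g g') (adj_sym h h').
by [].
Qed.

Lemma lex_adj_irr G H : irreflexive (@lex_adj G H).
Proof. by move=> [g h]; rewrite /lex_adj /= eqxx !adj_irr. Qed.

Definition lexprod (G H : sgraph) : sgraph :=
  SGraph (@lex_adj_sym G H) (@lex_adj_irr G H).

(* Quotient F/P for P a family of vertex sets (meaningful when P is a
   partition of V(F)): vertices are the blocks, PQ an edge iff P <> Q and
   some p in P is adjacent to some q in Q. *)
Section Quotient.
Variables (F : sgraph) (P : {set {set F}}).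

Definition qvert : finType := {X : {set F} | X \in P}.

Definition qadj : rel qvert :=
  fun X Y => (X != Y) && [exists p in val X, exists q in val Y, adj p q].

Lemma qadj_sym : symmetric qadj.
Proof.
move=> X Y; rewrite /qadj eq_sym; congr (_ && _).
apply/existsP/existsP => -[p /andP [pX /existsP [q /andP [qY pq]]]];
  exists q; rewrite qY /=; apply/existsP; exists p;
  by rewrite pX /= adj_sym.
Qed.

Lemma qadj_irr : irreflexive qadj.
Proof. by move=> X; rewrite /qadj eqxx. Qed.

Definition quotient_graph : sgraph := SGraph qadj_sym qadj_irr.
End Quotient.

Definition induced_connected (F : sgraph) (X : {set F}) : bool :=
  [forall x in X, forall y in X,
     connect [rel u v | [&& adj u v, u \in X & v \in X]] x y].

Definition contraction_closed (C : gclass) : Prop :=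
  forall (F : sgraph) (P : {set {set F}}),
    C F -> partition P [set: F] ->
    (forall X, X \in P -> induced_connected X) ->
    forall K : sgraph, iso K (quotient_graph P) -> C K.

Definition lex_preserved (C : gclass) : Prop :=
  forall G G' H : sgraph, hom_equiv C G G' ->
    hom_equiv C (lexprod G H) (lexprod G' H).

(* Main.v *)
Require Import Defs.
From mathcomp Require Import all_boot.
Set Implicit Arguments. Unset Strict Implicit. Unset Printing Implicit Defensive.

Definition gprod_adj (G H : sgraph) : rel (G * H)%type :=
  fun u v => adj u.1 v.1 && adj u.2 v.2.
Lemma gprod_adj_sym G H : symmetric (@gprod_adj G H).
Proof. by move=> [a b] [c d]; rewrite /gprod_adj /= adj_sym (adj_sym b). Qed.
Lemma gprod_adj_irr G H : irreflexive (@gprod_adj G H).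
Proof. by move=> [a b]; rewrite /gprod_adj /= adj_irr. Qed.
Definition gprod (G H : sgraph) : sgraph := SGraph (@gprod_adj_sym G H) (@gprod_adj_irr G H).

Lemma hom_gprod (A X Y : sgraph) : hom A (gprod X Y) = hom A X * hom A Y.
Proof.
rewrite /hom -cardsX.
pose g (p : {ffun A -> X} * {ffun A -> Y}) : {ffun A -> gprod X Y} :=
  [ffun a => (p.1 a, p.2 a)].
have ginj : injective g.
  move=> [p1 p2] [q1 q2] /ffunP E; congr pair; apply/ffunP => a;
  by have := E a; rewrite !ffunE => -[].
rewrite -(card_imset _ ginj); apply: eq_card => f; rewrite inE.
apply/idP/imsetP => [hf | [[p1 p2] /setXP[] /[!inE] h1 h2 ->]].
  exists ([ffun a => (f a).1], [ffun a => (f a).2]).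
    rewrite !inE; apply/andP; split; apply/forallP => x; apply/forallP => y;
    apply/implyP => xy; have := implyP (forallP (forallP hf x) y) xy;
    by rewrite !ffunE => /andP[].
  by apply/ffunP => a; rewrite !ffunE /=; case: (f a).
apply/forallP => x; apply/forallP => y; apply/implyP => xy.
rewrite !ffunE /= /gprod_adj /=.
by rewrite (implyP (forallP (forallP h1 x) y) xy) (implyP (forallP (forallP h2 x) y) xy).
Qed.

Lemma hom_equiv_gprod C G G' J : hom_equiv C G G' -> hom_equiv C (gprod G J) (gprod G' J).
Proof. by move=> h K CK; rewrite !hom_gprod h. Qed.

Lemma iso_sym G H : iso G H -> iso H G.
Proof.
move=> [f [[g fg gf] af]]; exists g; split; first by exists f.
by move=> x y; rewrite -af !gf.
Qed.

Lemma hom_iso_le A B X : iso A B -> hom B X <= hom A X.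
Proof.
move=> [f [[g fg gf] af]]; rewrite /hom.
pose pre (h : {ffun B -> X}) : {ffun A -> X} := [ffun a => h (f a)].
have pinj : injective pre.
  move=> h1 h2 /ffunP E; apply/ffunP => b; have := E (g b); by rewrite !ffunE gf.
rewrite -(card_imset _ pinj); apply: subset_leq_card; apply/subsetP => h'.
case/imsetP => h; rewrite inE => hh ->; rewrite inE.
apply/forallP => x; apply/forallP => y; apply/implyP => xy; rewrite !ffunE.
by apply: (implyP (forallP (forallP hh (f x)) (f y))); rewrite af.
Qed.

Lemma hom_iso A B X : iso A B -> hom A X = hom B X.
Proof.
by move=> h; apply/eqP; rewrite eqn_leq !hom_iso_le //; apply: iso_sym.
Qed.

Lemma iso_refl A : iso A A.
Proof. by exists id; split; [exists id|]. Qed.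

Lemma hom_self_pos A : 0 < hom A A.
Proof.
rewrite /hom card_gt0; apply/set0Pn; exists [ffun x => x]; rewrite inE.
by apply/forallP => x; apply/forallP => y; rewrite !ffunE; apply/implyP.
Qed.


Lemma connect_inv (T : finType) (S : eqType) (e : rel T) (k : T -> S) :
  (forall u v, e u v -> k u = k v) -> forall x y, connect e x y -> k x = k y.
Proof.
move=> H x y /connectP [p pth ->]; elim: p x pth => //= z p IH x /andP[exz pz].
by rewrite (H _ _ exz); apply: IH.
Qed.

Lemma eq_equivalence_partition (T : finType) (R R' : rel T) (D : {set T}) :
  (forall x y, R x y = R' x y) ->
  equivalence_partition R D = equivalence_partition R' D.
Proof.
move=> H; rewrite /equivalence_partition; apply: eq_imset => x.
by apply/setP => y; rewrite !inE H.
Qed.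

Definition CP (K : sgraph) : {set {set {set K}}} :=
  [set P : {set {set K}} | partition P [set: K] && [forall B in P, induced_connected B]].

Definition goodb (K H : sgraph) (P : {set {set K}}) (b : {ffun K -> H}) : bool :=
  [forall x, forall y, (adj x y && (y \in pblock P x)) ==> adj (b x) (b y)].

Arguments goodb {K H} P b.
Definition Phi (K H : sgraph) (P : {set {set K}}) : nat := #|[set b : {ffun K -> H} | goodb P b]|.
Arguments Phi {K} H P.

Lemma Phi_pos (K : sgraph) (P : {set {set K}}) : 0 < Phi K P.
Proof.
rewrite /Phi card_gt0; apply/set0Pn; exists [ffun x => x]; rewrite inE.
by apply/forallP => x; apply/forallP => y; rewrite !ffunE; apply/implyP => /andP[].
Qed.

Section Dec.
Variables (K X H : sgraph).

Definition rel_f (f : {ffun K -> lexprod X H}) : rel K :=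
  fun x y => adj x y && ((f x).1 == (f y).1).

Lemma rel_f_sym f : symmetric (rel_f f).
Proof. by move=> x y; rewrite /rel_f adj_sym eq_sym. Qed.

Definition part f : {set {set K}} := equivalence_partition (connect (rel_f f)) [set: K].

Lemma connect_equiv f : {in [set: K] & &, equivalence_rel (connect (rel_f f))}.
Proof.
move=> x y z _ _ _; split; first exact: connect0.
have cs := sym_connect_sym (rel_f_sym f).
move=> cxy; apply/idP/idP => [cxz|cyz]; first by apply: connect_trans cxz; rewrite cs.
exact: connect_trans cxy cyz.
Qed.

Lemma pblock_part f x y : (y \in pblock (part f) x) = connect (rel_f f) x y.
Proof. exact: (pblock_equivalence_partition (connect_equiv f) (in_setT x) (in_setT y)). Qed.

Lemma part_CP f : part f \in CP K.
Proof.
have hp := equivalence_partitionP (connect_equiv f).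
rewrite inE hp /=; apply/forallP => B; apply/implyP => BP.
apply/forallP => x; apply/implyP => xB; apply/forallP => y; apply/implyP => yB.
have tI := partition_trivIset hp.
have eB u : u \in B -> pblock (part f) u = B := def_pblock tI BP.
have cxy : connect (rel_f f) x y by rewrite -pblock_part (eB x xB).
move: cxy yB => /connectP [p pth ->] _.
elim: p x xB pth => [|z p IHp] x xB /=; first by rewrite connect0.
case/andP => rxz pth.
have zB : z \in B by rewrite -(eB x xB) pblock_part connect1.
apply: connect_trans (IHp z zB pth); apply: connect1.
move: rxz => /andP[axz _]; simpl; rewrite axz xB zB; done.
Qed.

Section Fixed.
Variable P : {set {set K}}.
Hypothesis hP : P \in CP K.

Let hpart : partition P [set: K].
Proof. by move: hP; rewrite inE => /andP[]. Qed.
Let tI : trivIset P := partition_trivIset hpart.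
Let hconn B : B \in P -> induced_connected B.
Proof. by move: hP; rewrite inE => /andP[_ /forallP h] BP; exact: (implyP (h B) BP). Qed.
Let hcov x : x \in cover P.
Proof. by rewrite (cover_partition hpart) in_setT. Qed.

Lemma blk_mem x : pblock P x \in P.
Proof. exact: pblock_mem (hcov x). Qed.

Definition blk x : quotient_graph P := exist _ (pblock P x) (blk_mem x).

Lemma mem_blk x : x \in val (blk x).
Proof. by rewrite /= mem_pblock hcov. Qed.

Lemma blk_val (B : quotient_graph P) x : x \in val B -> blk x = B.
Proof. by move=> xB; apply: val_inj; rewrite /= (def_pblock tI (valP B) xB). Qed.

Lemma blk_eq x y : (blk x == blk y) = (y \in pblock P x).
Proof. by rewrite -(eq_pblock _ tI (hcov x)) -val_eqE. Qed.

Definition phi (p : {ffun quotient_graph P -> X} * {ffun K -> H}) : {ffun K -> lexprod X H} :=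
  [ffun x => (p.1 (blk x), p.2 x)].

Lemma phi_inj : injective phi.
Proof.
move=> [p1 p2] [q1 q2] /ffunP E; congr pair.
  apply/ffunP => B.
  have /set0Pn [x xB] : val B != set0 := partition_neq0 hpart (valP B).
  by have := E x; rewrite !ffunE /= (blk_val xB) => -[].
by apply/ffunP => x; have := E x; rewrite !ffunE /= => -[].
Qed.

Lemma dec_card :
  #|[set f | is_hom f && (part f == P)]| = (hom (quotient_graph P) X * Phi H P)%N.
Proof.
rewrite /hom /Phi -cardsX -(card_imset _ phi_inj); apply: eq_card => f.
rewrite !inE; apply/andP/imsetP.
  move=> [hf /eqP pf].
  have same x y : y \in pblock P x -> (f x).1 = (f y).1.
    rewrite -pf pblock_part; apply: (connect_inv (k := fun u => (f u).1)) => u v /andP[_ /eqP] //.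
  have hA : forall B : quotient_graph P, {z : X | forall x, x \in val B -> (f x).1 = z}.
    move=> B; case: (pickP (mem (val B))) => [x xB | none].
      exists (f x).1 => y yB; apply/esym/same.
      by rewrite (def_pblock tI (valP B) xB).
    exfalso; have /set0Pn [x xB] : val B != set0 := partition_neq0 hpart (valP B).
    by have := none x; rewrite /= xB.
  exists ([ffun B => sval (hA B)], [ffun x => (f x).2]); last first.
    apply/ffunP => x; rewrite !ffunE /=.
    rewrite -(svalP (hA (blk x)) x (mem_blk x)); by case: (f x).
  rewrite !inE; apply/andP; split.
    apply/forallP => B1; apply/forallP => B2; apply/implyP.
    case/andP => ne /existsP [p /andP [pB1 /existsP [q /andP [qB2 pq]]]].
    rewrite !ffunE -(svalP (hA B1) p pB1) -(svalP (hA B2) q qB2).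
    have := implyP (forallP (forallP hf p) q) pq; rewrite /= /lex_adj.
    case: eqP => //= e _; exfalso; move/negP: ne; apply.
    have qp : q \in pblock P p.
      by rewrite -pf pblock_part connect1 // /rel_f pq e eqxx.
    rewrite -(blk_val pB1) -(blk_val qB2) blk_eq //.
  apply/forallP => x; apply/forallP => y; apply/implyP => /andP[xy yx].
  have := implyP (forallP (forallP hf x) y) xy; rewrite !ffunE /= /lex_adj.
  by rewrite (same x y yx) eqxx adj_irr orbF.
move=> [[a b] /setXP [] /[!inE] ha hb ->]; split.
  apply/forallP => x; apply/forallP => y; apply/implyP => xy.
  rewrite !ffunE /= /lex_adj /=.
  case: (boolP (blk x == blk y)) => e /=.
    apply/orP; left; have := implyP (forallP (forallP hb x) y).
    by rewrite xy -blk_eq e (eqP e) eqxx => ->.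
  apply/orP; right; have := implyP (forallP (forallP ha (blk x)) (blk y)); apply.
  rewrite /= /qadj e /=; apply/existsP; exists x; rewrite mem_blk /=.
  by apply/existsP; exists y; rewrite mem_blk.
apply/eqP; rewrite /part -{2}(equivalence_partition_pblock hpart).
apply: eq_equivalence_partition => x y; apply/idP/idP.
  move=> cxy; rewrite -blk_eq; apply/eqP; apply: (connect_inv _ cxy).
  move=> u v /andP[uv]; rewrite !ffunE /=; apply: contraTeq => ne.
  have : qadj (blk u) (blk v).
    rewrite /qadj ne /=; apply/existsP; exists u; rewrite mem_blk /=.
    by apply/existsP; exists v; rewrite mem_blk.
  move/(implyP (forallP (forallP ha (blk u)) (blk v))).
  by apply: contraTneq => ->; rewrite adj_irr.
move=> yx.
have Bc := hconn (blk_mem x).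
have xB : x \in pblock P x by rewrite mem_pblock hcov.
have := implyP (forallP (implyP (forallP Bc x) xB) y) yx.
apply: connect_sub => u v /= /and3P [uv uB vB]; apply: connect1.
rewrite /rel_f uv /= !ffunE /=.
by rewrite (blk_val (B := blk x) uB) (blk_val (B := blk x) vB).
Qed.

End Fixed.

Lemma hom_lex : hom K (lexprod X H) = \sum_(P in CP K) hom (quotient_graph P) X * Phi H P.
Proof.
rewrite {1}/hom -sum1_card (partition_big (@part) (mem (CP K))); last by move=> f _; exact: part_CP.
apply: eq_bigr => P hP; rewrite -dec_card // -sum1_card; apply: eq_bigl => f.
by rewrite !inE.
Qed.
End Dec.

From mathcomp Require Import all_algebra ring.
From Stdlib Require Import Classical.
Import GRing.Theory Num.Theory.
Local Notation hom := Defs.hom.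

Section VDM.
Local Open Scope ring_scope.

Lemma vdm (I : finType) (S : {set I}) (a x : I -> int) :
  (forall m, \sum_(i in S) a i * x i ^+ m = 0) ->
  forall v, \sum_(i in S | x i == v) a i = 0.
Proof.
move=> H v.
pose W := [seq x i | i <- enum [set i in S | x i != v]].
pose p : {poly int} := \prod_(w <- W) ('X - w%:P).
have hp t : p.[t] = \prod_(w <- W) (t - w).
  by rewrite /p horner_prod; apply: eq_bigr => w _; rewrite hornerXsubC.
have h0 : \sum_(i in S) a i * p.[x i] = 0.
  under eq_bigr => i _ do rewrite horner_coef mulr_sumr.
  rewrite exchange_big /= big1 // => k _.
  under eq_bigr => i _ do rewrite mulrCA.
  by rewrite -mulr_sumr H mulr0.
have hz i : i \in S -> x i != v -> p.[x i] = 0.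
  move=> iS xv; rewrite hp; apply/eqP; rewrite prodf_seq_eq0; apply/hasP.
  exists (x i); last by rewrite subrr.
  by apply/mapP; exists i => //; rewrite mem_enum !inE iS.
have hv : p.[v] != 0.
  rewrite hp prodf_seq_neq0; apply/allP => w /= wW; rewrite subr_eq0.
  apply/eqP => ev; move: wW; rewrite -ev.
  by case/mapP => i; rewrite mem_enum !inE => /andP[_ ne] e; rewrite e eqxx in ne.
have : \sum_(i in S | x i == v) a i * p.[x i] = 0.
  move: h0; rewrite (bigID (fun i => x i == v)) /= [X in _ + X = _]big1 ?addr0 //.
  by move=> i /andP[iS xv]; rewrite hz ?mulr0.
under eq_bigr => i /andP[_ /eqP ->] do [].
by rewrite -mulr_suml => /eqP; rewrite mulf_eq0 (negPf hv) orbF => /eqP.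
Qed.

Lemma indep (I : finType) (f : I -> sgraph -> nat) (c : I -> int) :
  (forall i X Y, f i (gprod X Y) = (f i X * f i Y)%N) ->
  forall S : {set I}, (forall J, \sum_(i in S) c i * (f i J)%:R = 0) ->
  forall i0, i0 \in S -> exists S' : {set I},
    [/\ i0 \in S', (forall i, i \in S' -> forall J, f i J = f i0 J) &
        forall J, \sum_(i in S') c i * (f i J)%:R = 0].
Proof.
move=> fm S; have [n] := ubnP #|S|; elim: n S => // n IH S Sn HS i0 i0S.
case: (classic (exists i, i \in S /\ exists J, f i J <> f i0 J)) =>
  [[i [iS [J0 ne]]] | nex]; last first.
  exists S; split=> // i iS J; apply: NNPP => ne; apply: nex.
  by exists i; split => //; exists J.
pose S1 := [set j in S | f j J0 == f i0 J0].
have S1S : (#|S1| < n)%N.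
  have : S1 \proper S.
    apply/properP; split; first by apply/subsetP => j; rewrite inE => /andP[].
    by exists i => //; rewrite inE iS /=; apply/eqP.
  by move/proper_card => h; apply: leq_trans h _.
have HS1 : forall J, \sum_(j in S1) c j * (f j J)%:R = 0.
  move=> Y.
  have fit m j : f j (iter m (fun Z => gprod Z J0) Y) = (f j Y * f j J0 ^ m)%N.
    elim: m => [|m IHm] /=; first by rewrite expn0 muln1.
    by rewrite fm IHm expnSr mulnA.
  have := @vdm I S (fun j => c j * (f j Y)%:R) (fun j => (f j J0)%:R) _ (f i0 J0)%:R.
  have -> : \sum_(j in S1) c j * (f j Y)%:R = \sum_(j in S | (f j J0)%:R == (f i0 J0)%:R :> int) c j * (f j Y)%:R.
    by apply: eq_bigl => j; rewrite inE eqr_nat.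
  apply => m; have := HS (iter m (fun Z => gprod Z J0) Y).
  by under eq_bigr => j _ do rewrite fit natrM natrX mulrA.
have i0S1 : i0 \in S1 by rewrite inE i0S /=.
have [S' [H1 H2 H3]] := IH S1 S1S HS1 i0 i0S1.
by exists S'.
Qed.

End VDM.

Lemma lexL (C : gclass) :
  (forall F, C F -> forall P, P \in CP F -> forall G G', hom_equiv C G G' ->
     hom (quotient_graph P) G = hom (quotient_graph P) G') -> lex_preserved C.
Proof.
move=> h G G' H hGG' F CF; rewrite !hom_lex; apply: eq_bigr => P hP.
by rewrite (h F CF P hP G G' hGG').
Qed.

Lemma CP_of (F : sgraph) (P : {set {set F}}) :
  P \in CP F -> partition P [set: F] /\ (forall X, X \in P -> induced_connected X).
Proof.
rewrite inE => /andP[h1 /forallP h2]; split => // X XP; exact: (implyP (h2 X) XP).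
Qed.

Lemma hard (C : gclass) : lex_preserved C -> contraction_closed (cl C).
Proof.
move=> hl F P clF hpart hconn K' isoK G G' hGG'.
rewrite !(hom_iso _ isoK).
have hP : P \in CP F.
  by rewrite inE hpart; apply/forallP => B; apply/implyP; exact: hconn.
pose f (i : {set {set F}}) (J : sgraph) := hom (quotient_graph i) J.
pose c i : int := (((f i G)%:R - (f i G')%:R) * (Phi F i)%:R)%R.
have key : forall J, (\sum_(i in CP F) c i * (f i J)%:R = 0)%R.
  move=> J.
  have e := clF _ _ (hl _ _ F (hom_equiv_gprod J hGG')).
  rewrite !hom_lex in e.
  have e' : (\sum_(i in CP F) (f i G * f i J * Phi F i))%N =
            (\sum_(i in CP F) (f i G' * f i J * Phi F i))%N.
    by move: e; rewrite /f; under eq_bigr => i _ do rewrite hom_gprod;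
       under [X in _ = X -> _]eq_bigr => i _ do rewrite hom_gprod.
  transitivity (((\sum_(i in CP F) (f i G * f i J * Phi F i))%N)%:R -
                ((\sum_(i in CP F) (f i G' * f i J * Phi F i))%N)%:R : int)%R;
    last by rewrite e' GRing.subrr.
  rewrite !natr_sum -sumrB; apply: eq_bigr => i _; rewrite !natrM /c; ring.
have [S' [i0S' Hf Hs]] := indep (f := f) (c := c) (fun i X Y => hom_gprod _ X Y) key hP.
have := Hs (quotient_graph P).
under eq_bigr => i iS' do rewrite /c !(Hf i iS').
rewrite -mulr_suml -mulr_sumr => /eqP; rewrite !mulf_eq0 => /orP[/orP[]|].
- by rewrite subr_eq0 eqr_nat => /eqP.
- rewrite -natr_sum pnatr_eq0 => /eqP h; exfalso; move: h.
  rewrite (bigD1 P) //=; have := Phi_pos P; case: (Phi F P) => //.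
- by rewrite pnatr_eq0 /f; have := hom_self_pos (quotient_graph P); case: hom.
Qed.

Theorem theorem15 (C : gclass) :
  (contraction_closed C -> lex_preserved C) /\
  (lex_preserved C <-> contraction_closed (cl C)).
Proof.
have easy (D : gclass) : (forall F, C F -> D F) -> contraction_closed D ->
    (forall F, D F -> forall G G', hom_equiv C G G' -> hom F G = hom F G') ->
    lex_preserved C.
  move=> CD cD Dh; apply: lexL => F CF P hP G G' hGG'.
  have [h1 h2] := CP_of hP.
  exact: (Dh _ (cD F P (CD F CF) h1 h2 _ (iso_refl _))).
split.
  move=> cC; apply: (easy C) => //; move=> F CF G G' h; exact: (h F CF).
split; first exact: hard.
move=> cc; apply: (easy (cl C)) => //.
move=> F CF G G' h; exact: (h F CF).
Qed.
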